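(* In the setup below (no gauge condition imposed on $|\Psi_x^{SE}\rangle$), assume $p(\omega|x)>0$ for all $\omega\in\checkmark$. Then $\langle F_{\Omega,x}\rangle$ is real, $I^Q=4(\langle G_{\Omega,x}\rangle-\langle F_{\Omega,x}\rangle^2)$, and the measurement encoding is lossless, i.e. $\sum_{\omega\in\checkmark}p(\omega|x)I(\sigma_{x|\omega})=I^Q$, if and only if $$\langle F_{\omega,x}\rangle=\langle F_{\Omega,x}\rangle\langle E_{\omega,x}\rangle\ \ \text{for all }\omega\in\checkmark,\qquad \langle G_{\times,x}\rangle=\langle F_{\Omega,x}\rangle\langle F_{\times,x}^\dagger\rangle .$$ In particular, losslessness requires $\partial_x\langle E_{\omega,x}\rangle=0$ for all $\omega\in\checkmark$.
   Context: Setup: finite-dimensional $\mathcal H_S,\mathcal H_E$; unit vectors $|\psi_i\rangle\in\mathcal H_S$, $|\phi_i^E\rangle\in\mathcal H_E$; a $C^1$ family of unitaries $U_x^{SE}$ on $\mathcal H_S\otimes\mathcal H_E$; an orthonormal basis $\{|\pi_\omega^E\rangle\}_{\omega\in\Omega}$ of $\mathcal H_E$, $\Omega=\checkmark\sqcup\times$. $|\Psi_x^{SE}\rangle=U_x^{SE}(|\psi_i\rangle\otimes|\phi_i^E\rangle)$, $M_{\omega,x}=\langle\pi_\omega^E|U_x^{SE}|\phi_i^E\rangle$, $|\tilde\psi_{x|\omega}\rangle=M_{\omega,x}|\psi_i\rangle$, $p(\omega|x)=\|\tilde\psi_{x|\omega}\|^2$, $\sigma_{x|\omega}=|\tilde\psi_{x|\omega}\rangle\langle\tilde\psi_{x|\omega}|/p(\omega|x)$.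 QFI of a normalized pure state: $I(|\phi_x\rangle)=4(\langle\partial_x\phi_x|\partial_x\phi_x\rangle-|\langle\phi_x|\partial_x\phi_x\rangle|^2)$; $I^Q=I(|\Psi_x^{SE}\rangle)$. Define $E_{\omega,x}=M_{\omega,x}^\dagger M_{\omega,x}$, $F_{\omega,x}=i\,\partial_xM_{\omega,x}^\dagger M_{\omega,x}$, $G_{\omega,x}=\partial_xM_{\omega,x}^\dagger\partial_xM_{\omega,x}$, and for $S\subseteq\Omega$, $X_{S,x}=\sum_{\omega\in S}X_{\omega,x}$. $\langle A\rangle=\langle\psi_i|A|\psi_i\rangle$. *)

(* Defs.v *)
From HB Require Import structures.
From mathcomp Require Import all_boot all_order all_algebra.
From mathcomp Require Import complex.
From mathcomp Require Import all_classical all_reals all_analysis.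
Set Implicit Arguments. Unset Strict Implicit. Unset Printing Implicit Defensive.
Import Order.TTheory GRing.Theory Num.Theory.
Import numFieldNormedType.Exports.
Local Open Scope ring_scope.

Section QFI.
Variable R : realType.
Local Notation C := (R[i]).

Definition adj m n (A : 'M[C]_(m, n)) : 'M[C]_(n, m) := (map_mx Num.conj A)^T.
Definition dotc n (u v : 'cV[C]_n) : C := (adj u *m v) 0 0.
Definition expect n (psi : 'cV[C]_n) (A : 'M[C]_n) : C := dotc psi (A *m psi).
Definition unitary n (A : 'M[C]_n) : Prop := adj A *m A = 1%:M /\ A *m adj A = 1%:M.

Definition cderiv (f : R -> C) (t : R) : C :=
  (derive1 (@complex.Re R \o f) t +i* derive1 (@complex.Im R \o f) t)%C.
Definition mderiv m n (f : R -> 'M[C]_(m, n)) (t : R) : 'M[C]_(m, n) :=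
  \matrix_(i, j) cderiv (fun s => f s i j) t.

Definition C1c (f : R -> C) : Prop :=
  (forall t, derivable (@complex.Re R \o f) t 1) /\ (forall t, derivable (@complex.Im R \o f) t 1) /\
  continuous (derive1 (@complex.Re R \o f)) /\ continuous (derive1 (@complex.Im R \o f)).
Definition C1mx m n (f : R -> 'M[C]_(m, n)) : Prop :=
  forall i j, C1c (fun t => f t i j).

(* QFI of a normalized pure state family *)
Definition QFI n (phi : R -> 'cV[C]_n) (x : R) : C :=
  4%:R * (dotc (mderiv phi x) (mderiv phi x) - `|dotc (phi x) (mderiv phi x)| ^+ 2).

(* Kronecker product of column vectors, index (mxvec_index s e) <-> (s, e) *)
Definition kronv m n (u : 'cV[C]_m) (v : 'cV[C]_n) : 'cV[C]_(m * n) :=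
  (mxvec (u *m v^T))^T.

Variables (dS dE : nat) (psi : 'cV[C]_dS) (phiE : 'cV[C]_dE)
  (U : R -> 'M[C]_(dS * dE)) (P : 'M[C]_dE).
(* columns of P are the basis vectors pi_omega, omega : 'I_dE *)

Definition PsiSE (t : R) : 'cV[C]_(dS * dE) := U t *m kronv psi phiE.
Definition Mop (w : 'I_dE) (t : R) : 'M[C]_dS :=
  \matrix_(s', s) \sum_(e' < dE) \sum_(e < dE)
     (P e' w)^* * U t (mxvec_index s' e') (mxvec_index s e) * phiE e 0.
Definition psit (w : 'I_dE) (t : R) : 'cV[C]_dS := Mop w t *m psi.
Definition prob (w : 'I_dE) (t : R) : C := dotc (psit w t) (psit w t).
(* normalized post-measurement pure state (vector representative of sigma_{x|w}) *)
Definition sigvec (w : 'I_dE) (t : R) : 'cV[C]_dS := (sqrtC (prob w t))^-1 *: psit w t.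
Definition Eop (w : 'I_dE) (t : R) : 'M[C]_dS := adj (Mop w t) *m Mop w t.
Definition Fop (w : 'I_dE) (t : R) : 'M[C]_dS :=
  'i%C *: (adj (mderiv (Mop w) t) *m Mop w t).
Definition Gop (w : 'I_dE) (t : R) : 'M[C]_dS := adj (mderiv (Mop w) t) *m mderiv (Mop w) t.
Definition Eset (S : {set 'I_dE}) t := \sum_(w in S) Eop w t.
Definition Fset (S : {set 'I_dE}) t := \sum_(w in S) Fop w t.
Definition Gset (S : {set 'I_dE}) t := \sum_(w in S) Gop w t.
End QFI.

(* Main.v *)
Require Import Defs.
From HB Require Import structures.
From mathcomp Require Import all_boot all_order all_algebra.
From mathcomp Require Import complex.
From mathcomp Require Import all_classical all_reals all_analysis.
From mathcomp Require Import ring.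
Import Order.TTheory GRing.Theory Num.Theory.
Import numFieldNormedType.Exports.
Local Open Scope ring_scope.
Set Implicit Arguments.

Section Anal.
Variable R : realType.
Local Notation C := (R[i]).

Definition cdv (f : R -> C) (t : R) (df : C) : Prop :=
  is_derive t (1:R) (@complex.Re R \o f) (complex.Re df) /\
  is_derive t (1:R) (@complex.Im R \o f) (complex.Im df).

Lemma ivl (f : R -> R) t a b : is_derive t (1:R) f a -> a = b -> is_derive t 1 f b.
Proof. by move=> h <-. Qed.

Lemma cdv_cderiv f t df : cdv f t df -> cderiv f t = df.
Proof.
case=> h1 h2; rewrite /cderiv !derive1E.
rewrite (@derive_val _ _ _ _ _ _ _ h1) (@derive_val _ _ _ _ _ _ _ h2).
by case: df {h1 h2}.
Qed.

Lemma cdv_uniq f t d1 d2 : cdv f t d1 -> cdv f t d2 -> d1 = d2.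
Proof. by move=> /cdv_cderiv <- /cdv_cderiv <-. Qed.

Lemma cdv_ext f g t df : cdv f t df -> (forall s, f s = g s) -> cdv g t df.
Proof. by move=> h fg; have <- : f = g by apply/funext. Qed.

Lemma cdv_val f t d1 d2 : d1 = d2 -> cdv f t d1 -> cdv f t d2.
Proof. by move=> ->. Qed.

Lemma cdv_cst (a : C) t : cdv (fun _ => a) t 0.
Proof. by split; apply: is_derive_cst. Qed.

Lemma cdvD f g t df dg : cdv f t df -> cdv g t dg ->
  cdv (fun s => f s + g s) t (df + dg).
Proof.
case=> f1 f2 [g1 g2]; split.
  have -> : @complex.Re R \o (fun s => f s + g s) = (@complex.Re R \o f) + (@complex.Re R \o g).
    by apply/funext => s; rewrite /comp !fctE /comp; case: (f s) => ? ?; case: (g s).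
  by case: df f1 f2 => ? ?; case: dg g1 g2 => ? ? /= *; apply: is_deriveD.
have -> : @complex.Im R \o (fun s => f s + g s) = (@complex.Im R \o f) + (@complex.Im R \o g).
  by apply/funext => s; rewrite /comp !fctE /comp; case: (f s) => ? ?; case: (g s).
by case: df f1 f2 => ? ?; case: dg g1 g2 => ? ? /= *; apply: is_deriveD.
Qed.

Lemma cdvM f g t df dg : cdv f t df -> cdv g t dg ->
  cdv (fun s => f s * g s) t (df * g t + f t * dg).
Proof.
case=> f1 f2 [g1 g2]; split.
  have -> : @complex.Re R \o (fun s => f s * g s) =
     (@complex.Re R \o f) * (@complex.Re R \o g) - (@complex.Im R \o f) * (@complex.Im R \o g).
    by apply/funext => s; rewrite /comp !fctE /comp; case: (f s) => ? ?; case: (g s).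
  eapply ivl; first exact: (is_deriveB (is_deriveM f1 g1) (is_deriveM f2 g2)).
  rewrite /comp; clear f1 f2 g1 g2; case: (f t) => ? ?; case: (g t) => ? ?; case: df => ? ?; case: dg => ? ? /=.
  rewrite /GRing.scale /=; ring.
have -> : @complex.Im R \o (fun s => f s * g s) =
   (@complex.Re R \o f) * (@complex.Im R \o g) + (@complex.Im R \o f) * (@complex.Re R \o g).
  by apply/funext => s; rewrite /comp !fctE /comp; case: (f s) => ? ?; case: (g s).
eapply ivl; first exact: (is_deriveD (is_deriveM f1 g2) (is_deriveM f2 g1)).
rewrite /comp; clear f1 f2 g1 g2; case: (f t) => ? ?; case: (g t) => ? ?; case: df => ? ?; case: dg => ? ? /=.
rewrite /GRing.scale /=; ring.
Qed.

Lemma cdvJ f t df : cdv f t df -> cdv (fun s => (f s)^*) t df^*.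
Proof.
case=> f1 f2; split.
  have -> : @complex.Re R \o (fun s => (f s)^*) = @complex.Re R \o f.
    by apply/funext => s; rewrite /comp ?fctE /comp; case: (f s).
  by case: df f1 f2.
have -> : @complex.Im R \o (fun s => (f s)^*) = - (@complex.Im R \o f).
  by apply/funext => s; rewrite /comp ?fctE /comp; case: (f s).
by case: df f1 f2 => ? ? /= _ h; apply: is_deriveN.
Qed.

Lemma cdv_sum (I : Type) (r : seq I) (P : pred I) (F : I -> R -> C) dF t :
  (forall i, P i -> cdv (F i) t (dF i)) ->
  cdv (fun s => \sum_(i <- r | P i) F i s) t (\sum_(i <- r | P i) dF i).
Proof.
move=> h; elim: r => [|a r IH].
  rewrite big_nil; have := @cdv_cst (0:C) t; move=> /cdv_ext; apply => s.
  by rewrite big_nil.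
rewrite big_cons; case: ifP => Pa.
  have := cdvD (h a Pa) IH; move=> /cdv_ext; apply => s.
  by rewrite big_cons Pa.
move: IH => /cdv_ext; apply => s; by rewrite big_cons Pa.
Qed.


Definition mdv m n (F : R -> 'M[C]_(m,n)) t (dF : 'M[C]_(m,n)) :=
  forall i j, cdv (fun s => F s i j) t (dF i j).

Lemma mdv_mderiv m n (F : R -> 'M[C]_(m,n)) t dF : mdv F t dF -> mderiv F t = dF.
Proof. by move=> h; apply/matrixP => i j; rewrite mxE; apply: cdv_cderiv. Qed.

Lemma mdv_ext m n (F G : R -> 'M[C]_(m,n)) t dF :
  mdv F t dF -> (forall s, F s = G s) -> mdv G t dF.
Proof. by move=> h fg; have <- : F = G by apply/funext. Qed.

Lemma mdv_val m n (F : R -> 'M[C]_(m,n)) t d1 d2 : d1 = d2 -> mdv F t d1 -> mdv F t d2.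
Proof. by move=> ->. Qed.

Lemma mdv_cst m n (A : 'M[C]_(m,n)) t : mdv (fun _ => A) t 0.
Proof. by move=> i j; rewrite mxE; apply: cdv_cst. Qed.

Lemma mdv_mul m n p (F : R -> 'M[C]_(m,n)) (G : R -> 'M[C]_(n,p)) t dF dG :
  mdv F t dF -> mdv G t dG ->
  mdv (fun s => F s *m G s) t (dF *m G t + F t *m dG).
Proof.
move=> hF hG i j.
have := cdv_sum (index_enum 'I_n) xpredT (fun k s => F s i k * G s k j)
  (fun k => dF i k * G t k j + F t i k * dG k j) (fun k _ => cdvM (hF i k) (hG k j)).
move=> /cdv_ext h.
have -> : (dF *m G t + F t *m dG) i j =
  \sum_(k <- index_enum 'I_n | xpredT k) (dF i k * G t k j + F t i k * dG k j).
  by rewrite !mxE -big_split.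
by apply: h => s; rewrite !mxE.
Qed.

Lemma mdv_adj m n (F : R -> 'M[C]_(m,n)) t dF :
  mdv F t dF -> mdv (fun s => adj (F s)) t (adj dF).
Proof.
move=> hF i j; rewrite !mxE; have := cdvJ (hF j i); move=> /cdv_ext; apply => s.
by rewrite !mxE.
Qed.

Lemma mdv_scale m n (c : R -> C) (F : R -> 'M[C]_(m,n)) t dc dF :
  cdv c t dc -> mdv F t dF -> mdv (fun s => c s *: F s) t (dc *: F t + c t *: dF).
Proof.
move=> hc hF i j; rewrite !mxE; have := cdvM hc (hF i j); move=> /cdv_ext; apply => s.
by rewrite !mxE.
Qed.

Lemma mdvD m n (F G : R -> 'M[C]_(m,n)) t dF dG :
  mdv F t dF -> mdv G t dG -> mdv (fun s => F s + G s) t (dF + dG).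
Proof.
move=> hF hG i j; rewrite !mxE; have := cdvD (hF i j) (hG i j); move=> /cdv_ext; apply => s.
by rewrite !mxE.
Qed.

Lemma mdv_C1 m n (F : R -> 'M[C]_(m,n)) t : C1mx F -> mdv F t (mderiv F t).
Proof.
move=> h i j; have [h1 [h2 _]] := h i j; rewrite mxE /cderiv; split => /=.
  by rewrite derive1E; apply: derivableP; apply: h1.
by rewrite derive1E; apply: derivableP; apply: h2.
Qed.

Lemma cdv_dotc n (u v : R -> 'cV[C]_n) t du dv :
  mdv u t du -> mdv v t dv ->
  cdv (fun s => dotc (u s) (v s)) t (dotc du (v t) + dotc (u t) dv).
Proof.
move=> hu hv; have := mdv_mul (mdv_adj hu) hv 0 0.
rewrite mxE; move=> /cdv_ext; apply => s; by [].
Qed.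

End Anal.
Arguments cdv {R}. Arguments mdv {R m n}.
Arguments cdv_cst {R}. Arguments mdv_cst {R m n}.
Section Alg.
Variable R : realType.
Local Notation C := (R[i]).

Lemma adj_mul m n p (A : 'M[C]_(m,n)) (B : 'M[C]_(n,p)) : adj (A *m B) = adj B *m adj A.
Proof. by rewrite /adj map_mxM trmx_mul. Qed.

Lemma adjK m n (A : 'M[C]_(m,n)) : adj (adj A) = A.
Proof. by apply/matrixP => i j; rewrite !mxE conjCK. Qed.

Lemma adjD m n (A B : 'M[C]_(m,n)) : adj (A + B) = adj A + adj B.
Proof. by apply/matrixP => i j; rewrite !mxE rmorphD. Qed.

Lemma adjZ m n a (A : 'M[C]_(m,n)) : adj (a *: A) = a^* *: adj A.
Proof. by apply/matrixP => i j; rewrite !mxE rmorphM. Qed.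

Lemma adj_sum m n (I : Type) (r : seq I) (P : pred I) (F : I -> 'M[C]_(m,n)) :
  adj (\sum_(i <- r | P i) F i) = \sum_(i <- r | P i) adj (F i).
Proof.
apply/matrixP => i j; rewrite !mxE !summxE rmorph_sum; apply: eq_bigr => k _.
by rewrite !mxE.
Qed.

Lemma adj1 n : adj (1%:M : 'M[C]_n) = 1%:M.
Proof. by apply/matrixP => i j; rewrite !mxE conjC_nat eq_sym. Qed.

Lemma dotcE n (u v : 'cV[C]_n) : dotc u v = \sum_i (u i 0)^* * v i 0.
Proof. by rewrite /dotc mxE; apply: eq_bigr => i _; rewrite !mxE. Qed.

Lemma dotcC n (u v : 'cV[C]_n) : dotc v u = (dotc u v)^*.
Proof.
rewrite !dotcE rmorph_sum; apply: eq_bigr => i _.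
by rewrite rmorphM /= conjCK mulrC.
Qed.

Lemma dotc_ge0 n (u : 'cV[C]_n) : 0 <= dotc u u.
Proof.
rewrite dotcE; apply: sumr_ge0 => i _; rewrite mulrC; exact: mul_conjC_ge0.
Qed.

Lemma dotc_real n (u : 'cV[C]_n) : (dotc u u)^* = dotc u u.
Proof. by rewrite -dotcC. Qed.

Lemma dotcDl n (u v w : 'cV[C]_n) : dotc (u + v) w = dotc u w + dotc v w.
Proof. by rewrite /dotc adjD mulmxDl mxE. Qed.

Lemma dotcDr n (u v w : 'cV[C]_n) : dotc w (u + v) = dotc w u + dotc w v.
Proof. by rewrite /dotc mulmxDr mxE. Qed.

Lemma dotcZl n a (u v : 'cV[C]_n) : dotc (a *: u) v = a^* * dotc u v.
Proof. by rewrite /dotc adjZ -scalemxAl mxE. Qed.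

Lemma dotcZr n a (u v : 'cV[C]_n) : dotc u (a *: v) = a * dotc u v.
Proof. by rewrite /dotc -scalemxAr mxE. Qed.

Lemma dotcNl n (u v : 'cV[C]_n) : dotc (- u) v = - dotc u v.
Proof. by rewrite -scaleN1r dotcZl rmorphN /= conjC1 mulN1r. Qed.

Lemma dotcBl n (u v w : 'cV[C]_n) : dotc (u - v) w = dotc u w - dotc v w.
Proof. by rewrite dotcDl dotcNl. Qed.

Lemma dotcBr n (u v w : 'cV[C]_n) : dotc w (u - v) = dotc w u - dotc w v.
Proof. by rewrite dotcC dotcBl rmorphB /= -!dotcC. Qed.

Lemma dotcMl m n (A : 'M[C]_(m,n)) u v : dotc (A *m u) v = dotc u (adj A *m v).
Proof. by rewrite /dotc adj_mul mulmxA. Qed.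

Lemma dotc_sumr n (I : Type) (r : seq I) (P : pred I) (F : I -> 'cV[C]_n) u :
  dotc u (\sum_(i <- r | P i) F i) = \sum_(i <- r | P i) dotc u (F i).
Proof. by rewrite /dotc mulmx_sumr summxE. Qed.

Lemma expect_adjM n k (psi : 'cV[C]_n) (A B : 'M[C]_(k,n)) :
  expect psi (adj A *m B) = dotc (A *m psi) (B *m psi).
Proof. by rewrite /expect /dotc adj_mul !mulmxA. Qed.

Lemma expectZ n (psi : 'cV[C]_n) a A : expect psi (a *: A) = a * expect psi A.
Proof. by rewrite /expect -scalemxAl dotcZr. Qed.

Lemma expect_sum n (psi : 'cV[C]_n) (I : Type) (r : seq I) (P : pred I) F :
  expect psi (\sum_(i <- r | P i) F i) = \sum_(i <- r | P i) expect psi (F i).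
Proof. by rewrite /expect mulmx_suml dotc_sumr. Qed.

Lemma expect_adj n (psi : 'cV[C]_n) A : expect psi (adj A) = (expect psi A)^*.
Proof. by rewrite /expect -dotcC dotcMl. Qed.

End Alg.
Section Struct.
Variable R : realType.
Local Notation C := (R[i]).
Variables (dS dE : nat) (psi : 'cV[C]_dS) (phiE : 'cV[C]_dE) (P : 'M[C]_dE).

Lemma sum_delta n (a : 'I_n) (f : 'I_n -> C) : \sum_k (a == k)%:R * f k = f a.
Proof.
rewrite (bigD1 a) //= eqxx mul1r big1 ?addr0 // => k; rewrite eq_sym => /negbTE ->.
by rewrite mul0r.
Qed.

Lemma idx_eq (s1 s2 : 'I_dS) (e1 e2 : 'I_dE) :
  (mxvec_index s1 e1 == mxvec_index s2 e2) = (s1 == s2) && (e1 == e2).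
Proof.
by rewrite /mxvec_index (inj_eq (@cast_ord_inj _ _ _)) (inj_eq (@enum_rank_inj _)) xpair_eqE.
Qed.

Definition Qm (w : 'I_dE) : 'M[C]_(dS, dS * dE) :=
  \matrix_(s', k) \sum_(e' < dE) (P e' w)^* * (k == mxvec_index s' e')%:R.
Definition Km : 'M[C]_(dS * dE, dS) :=
  \matrix_(k, s) \sum_(e < dE) (k == mxvec_index s e)%:R * phiE e 0.

Lemma Qidx w s' s1 e1 : Qm w s' (mxvec_index s1 e1) = (s1 == s')%:R * (P e1 w)^*.
Proof.
rewrite mxE (eq_bigr (fun e' => (e1 == e')%:R * ((s1 == s')%:R * (P e' w)^*))).
  by rewrite sum_delta.
by move=> e' _; rewrite idx_eq -mulnb natrM; ring.
Qed.

Lemma Kidx s e s2 : Km (mxvec_index s e) s2 = (s == s2)%:R * phiE e 0.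
Proof.
rewrite mxE (eq_bigr (fun e' => (e == e')%:R * ((s == s2)%:R * phiE e' 0))).
  by rewrite sum_delta.
by move=> e' _; rewrite idx_eq -mulnb natrM; ring.
Qed.

Lemma mulQ p w (Y : 'M[C]_(dS * dE, p)) s' l :
  (Qm w *m Y) s' l = \sum_(e' < dE) (P e' w)^* * Y (mxvec_index s' e') l.
Proof.
rewrite mxE.
under eq_bigr => k _ do rewrite mxE big_distrl /=.
rewrite exchange_big /=; apply: eq_bigr => e' _.
under eq_bigr => k _ do rewrite mulrAC mulrC eq_sym.
by rewrite sum_delta.
Qed.

Lemma mulK p (Y : 'M[C]_(p, dS * dE)) i s :
  (Y *m Km) i s = \sum_(e < dE) Y i (mxvec_index s e) * phiE e 0.
Proof.
rewrite mxE.
under eq_bigr => k _ do rewrite mxE big_distrr /=.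
rewrite exchange_big /=; apply: eq_bigr => e _.
under eq_bigr => k _ do rewrite mulrCA eq_sym.
by rewrite sum_delta.
Qed.

Lemma MopE (U : R -> 'M[C]_(dS * dE)) w t :
  Mop phiE U P w t = Qm w *m U t *m Km.
Proof.
apply/matrixP => s' s; rewrite mulK mxE exchange_big /=; apply: eq_bigr => e _.
by rewrite mulQ big_distrl.
Qed.

Lemma Kpsi : Km *m psi = kronv psi phiE.
Proof.
apply/matrixP => k j; rewrite ord1; case/mxvec_indexP: k => s e.
rewrite /kronv [RHS]mxE mxvecE !mxE big_ord1 mxE.
under eq_bigr => s2 _ do rewrite Kidx mulrAC -mulrA.
by rewrite sum_delta.
Qed.

Lemma KtK : adj Km *m Km = (dotc phiE phiE)%:M.
Proof.
apply/matrixP => s1 s2; rewrite mulK !mxE dotcE -mulr_natr big_distrl /=.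
apply: eq_bigr => e _.
rewrite /adj 2!mxE Kidx rmorphM /= conjC_nat eq_sym.
by case: (s1 == s2); rewrite ?mul1r ?mul0r ?mulr1 ?mulr0.
Qed.

Lemma adjM_entry m n p (A : 'M[C]_(m,n)) (B : 'M[C]_(m,p)) i j :
  (adj A *m B) i j = \sum_k (A k i)^* * B k j.
Proof. by rewrite mxE; apply: eq_bigr => k _; rewrite !mxE. Qed.

Lemma QQt : unitary P -> \sum_w adj (Qm w) *m Qm w = 1%:M.
Proof.
case=> _ PP.
apply/matrixP => k l; rewrite summxE.
case/mxvec_indexP: k => s1 e1; case/mxvec_indexP: l => s2 e2.
rewrite [RHS]mxE idx_eq.
rewrite (eq_bigr (fun w => (s1 == s2)%:R * (P e1 w * (P e2 w)^*))); last first.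
  move=> w _; rewrite adjM_entry.
  rewrite (eq_bigr (fun s' => (s1 == s')%:R * ((s2 == s')%:R * (P e1 w * (P e2 w)^*)))).
    by rewrite sum_delta eq_sym.
  by move=> s' _; rewrite !Qidx rmorphM /= conjC_nat conjCK; ring.
rewrite -big_distrr /=.
have : (P *m adj P) e1 e2 = (e1 == e2)%:R by rewrite PP mxE.
rewrite mxE => E.
rewrite (eq_bigr (fun j => P e1 j * adj P j e2)); last by move=> j _; rewrite !mxE.
by rewrite E -natrM mulnb.
Qed.

End Struct.
Section Core.
Variable R : realType.
Local Notation C := (R[i]).

Lemma core (I : finType) (chk : {set I}) (p G F : I -> C) (f : C) :
  f^* = f ->
  (forall w, (p w)^* = p w) ->
  (forall w, w \in chk -> 0 < p w) ->
  (forall w, 0 <= G w + f^+2 * p w - f * (F w + (F w)^*)) ->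
  \sum_(w in [set: I]) p w = 1 ->
  \sum_(w in [set: I]) F w = f ->
  (\sum_(w in chk) (G w - F w * (F w)^* / p w) = \sum_(w in [set: I]) G w - f^+2) <->
  ((forall w, w \in chk -> F w = f * p w) /\
    \sum_(w in ~: chk) G w = f * (\sum_(w in ~: chk) F w)^*).
Proof.
move=> hf hp hpos hH sp sF.
set H := fun w => G w + f^+2 * p w - f * (F w + (F w)^*).
have spl : forall h : I -> C,
    \sum_(w in [set: I]) h w = \sum_(w in chk) h w + \sum_(w in ~: chk) h w.
  by move=> h; rewrite (big_setID chk) /= finset.setTI finset.setTD.
have sumH : \sum_(w in [set: I]) H w = \sum_(w in [set: I]) G w - f^+2.
  rewrite /H big_split /= sumrN big_split /= -big_distrr /= -big_distrr /= big_split /=.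
  rewrite -rmorph_sum /= sp sF hf; ring.
set S1 := \sum_(w in chk) (G w - F w * (F w)^* / p w).
set D1 := \sum_(w in chk) ((F w - f * p w) * (F w - f * p w)^* / p w).
set D2 := \sum_(w in ~: chk) H w.
have eqD1 : D1 = \sum_(w in chk) H w - S1.
  rewrite /S1 -sumrB; apply: eq_bigr => w wc.
  have pn0 : p w != 0 by rewrite gt_eqF // hpos.
  rewrite rmorphB rmorphM /= hf hp /H; field.
  exact: pn0.
have key : D1 + D2 = \sum_(w in [set: I]) G w - f^+2 - S1.
  by rewrite -sumH (spl H) eqD1 /D2; ring.
have D1ge0 : 0 <= D1.
  apply: sumr_ge0 => w wc; apply: divr_ge0; first exact: mul_conjC_ge0.
  exact/ltW/hpos.
have D2ge0 : 0 <= D2 by apply: sumr_ge0 => w _; apply: hH.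
have D2val : (forall w, w \in chk -> F w = f * p w) ->
    D2 = \sum_(w in ~: chk) G w - f * (\sum_(w in ~: chk) F w)^*.
  move=> C1.
  have eF : \sum_(w in ~: chk) F w = f - f * \sum_(w in chk) p w.
    have h := sF; rewrite (spl F) (eq_bigr (fun w => f * p w) C1) -big_distrr /= in h.
    by apply: (addrI (f * \sum_(w in chk) p w)); rewrite h; ring.
  have ep : \sum_(w in ~: chk) p w = 1 - \sum_(w in chk) p w.
    have h := sp; rewrite (spl p) in h.
    by apply: (addrI (\sum_(w in chk) p w)); rewrite h; ring.
  have cp : (\sum_(w in chk) p w)^* = \sum_(w in chk) p w.
    by rewrite rmorph_sum; apply: eq_bigr => w _; rewrite /= hp.
  rewrite /D2 /H big_split /= sumrN big_split /= -big_distrr /= -big_distrr /= big_split /=.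
  rewrite -rmorph_sum /= eF ep rmorphB rmorphM /= hf cp; ring.
split.
- move=> hL.
  have h0 : D1 + D2 == 0 by rewrite key hL subrr.
  move: h0; rewrite paddr_eq0 // => /andP [/eqP hD1 /eqP hD2].
  have C1 : forall w, w \in chk -> F w = f * p w.
    move=> w wc; have := psumr_eq0P _ hD1 wc.
    have pn0 : p w != 0 by rewrite gt_eqF // hpos.
    move=> /(_ _)/eqP; rewrite mulf_eq0 invr_eq0 (negbTE pn0) orbF mul_conjC_eq0 subr_eq0.
    move=> h; apply/eqP/h => i ic; apply: divr_ge0; first exact: mul_conjC_ge0.
    exact/ltW/hpos.
  split => //; apply/eqP; rewrite -subr_eq0 -D2val //; exact/eqP.
- case=> C1 C2.
  have hD1 : D1 = 0.
    by apply: big1 => w wc; rewrite C1 // subrr mul0r mul0r.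
  have hD2 : D2 = 0 by rewrite D2val // C2 subrr.
  by apply/eqP; rewrite -subr_eq0 -oppr_eq0 opprB -key hD1 hD2 addr0.
Qed.

End Core.
Section QF.
Variable R : realType.
Local Notation C := (R[i]).

Lemma cdv_invsqrt (q : R -> C) x dq :
  (forall t, 0 <= q t) -> 0 < q x -> cdv q x dq ->
  exists r' : R, cdv (fun t => (sqrtC (q t))^-1) x (r'%:C)%C.
Proof.
move=> hq qx [hRe _].
have hs t : (sqrtC (q t))^-1 = ((Num.sqrt (complex.Re (q t)))^-1)%:C%C.
  have e : ((complex.Re (q t))%:C)%C = q t by apply: RRe_real; apply: ger0_real.
  have hr : 0 <= complex.Re (q t) by rewrite -ler0c e.
  rewrite -[in LHS]e.
  rewrite -[X in sqrtC (X%:C)%C](sqr_sqrtr hr) rmorphXn /= sqrCK; last first.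
    by rewrite ler0c sqrtr_ge0.
  by rewrite fmorphV.
have gx : 0 < complex.Re (q x).
  by move: qx; rewrite ltcE => /andP [_].
have h1 := is_derive1_sqrt gx.
have h2 := is_derive1_comp h1 hRe.
have nz : (Num.sqrt \o (complex.Re (R:=R) \o q)) x != 0.
  by rewrite /= gt_eqF // sqrtr_gt0.
have h3 := is_deriveV nz h2.
eexists; split.
  eapply ivl; last reflexivity.
  have -> : complex.Re (R:=R) \o (fun t => (sqrtC (q t))^-1) =
     (fun y => ((Num.sqrt \o (complex.Re (R:=R) \o q)) y)^-1).
    by apply/funext => t /=; rewrite hs.
  exact: h3.
have -> : complex.Im (R:=R) \o (fun t => (sqrtC (q t))^-1) = cst 0.
  by apply/funext => t /=; rewrite hs.
exact: is_derive_cst.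
Qed.

End QF.

Section QF2.
Variable R : realType.
Local Notation C := (R[i]).

Lemma qfi_alg n (m d : 'cV[C]_n) (g dl : C) :
  g^* = g -> dl^* = dl -> g^+2 * dotc m m = 1 ->
  dotc m m * (4%:R * (dotc (dl *: m + g *: d) (dl *: m + g *: d)
                - `|dotc (g *: m) (dl *: m + g *: d)| ^+ 2))
  = 4%:R * (dotc d d - dotc m d * (dotc m d)^* / dotc m m).
Proof.
move=> hg hd hgp.
have pn0 : dotc m m != 0.
  by apply/eqP => h; move: hgp; rewrite h mulr0 => /eqP; rewrite eq_sym oner_eq0.
have hp : (dotc m m)^* = dotc m m by apply: dotc_real.
have hinv : (dotc m m)^-1 = g^+2.
  by apply: (mulIf pn0); rewrite mulVf // hgp.
rewrite normCK !(dotcDl, dotcDr, dotcZl, dotcZr) !(rmorphD, rmorphM) /= hg hd hp.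
rewrite [dotc d m]dotcC hinv.
set p := dotc m m; set a := dotc m d; set b := a^*; set G := dotc d d.
have hb : (a^*)^* = a by rewrite conjCK.
rewrite hg.
apply/eqP; rewrite -subr_eq0; apply/eqP.
transitivity (4%:R * (g ^+ 2 * p - 1) * (G - a * b * g^+2 - dl^+2 * p^+2 - p * dl * g * (a + b))).
  ring.
by rewrite hgp subrr mulr0 mul0r.
Qed.
End QF2.

Lemma sum_setT (R : realType) n (F : 'I_n -> R[i]) :
  \sum_(w in [set: 'I_n]) F w = \sum_w F w.
Proof. by apply: eq_bigl => w; rewrite finset.in_setT. Qed.

Lemma conj_i (R : realType) : ('i%C : R[i])^* = - 'i%C.
Proof. by rewrite complexiE conjCi. Qed.

Theorem theorem3 (R : realType) (dS dE : nat)
  (psi : 'cV[R[i]]_dS) (phiE : 'cV[R[i]]_dE)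
  (U : R -> 'M[R[i]]_(dS * dE)) (P : 'M[R[i]]_dE)
  (chk : {set 'I_dE}) (x : R) :
  dotc psi psi = 1 ->
  dotc phiE phiE = 1 ->
  C1mx U ->
  (forall t, unitary (U t)) ->
  unitary P ->
  (forall w, w \in chk -> 0 < prob psi phiE U P w x) ->
  let FOm := expect psi (Fset phiE U P [set: 'I_dE] x) in
  let IQ := QFI (PsiSE psi phiE U) x in
  let lossless :=
    \sum_(w in chk) prob psi phiE U P w x * QFI (sigvec psi phiE U P w) x = IQ in
  [/\ FOm \is Num.real,
      IQ = 4%:R * (expect psi (Gset phiE U P [set: 'I_dE] x) - FOm ^+ 2),
      lossless <->
        ((forall w, w \in chk ->
            expect psi (Fop phiE U P w x) = FOm * expect psi (Eop phiE U P w x)) /\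
         expect psi (Gset phiE U P (~: chk) x) =
            FOm * expect psi (adj (Fset phiE U P (~: chk) x)))
    & lossless ->
      forall w, w \in chk ->
        cderiv (fun t => expect psi (Eop phiE U P w t)) x = 0].
Proof.
move=> hpsi hphi hU hUu hP hpos FOm IQ lossless.
have hK : Km R dS phiE *m psi = kronv psi phiE by apply: Kpsi.
have hmop : forall w t, Mop phiE U P w t *m psi = Qm R dS P w *m PsiSE psi phiE U t.
  by move=> w t; rewrite MopE /PsiSE -hK !mulmxA.
have norm1 : forall t, dotc (PsiSE psi phiE U t) (PsiSE psi phiE U t) = 1.
  move=> t; rewrite /PsiSE dotcMl mulmxA (hUu t).1 mul1mx -hK dotcMl mulmxA.
  by rewrite KtK hphi mul1mx hpsi.
have sumQ : forall u v, \sum_w dotc (Qm R dS P w *m u) (Qm R dS P w *m v) = dotc u v.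
  move=> u v; under eq_bigr => w _ do rewrite dotcMl mulmxA.
  by rewrite -dotc_sumr -mulmx_suml QQt // mul1mx.
pose dU := mderiv U x.
have mU : mdv U x dU := mdv_C1 x hU.
pose dPsi := dU *m kronv psi phiE.
have mPsi : mdv (PsiSE psi phiE U) x dPsi.
  have := mdv_mul mU (mdv_cst (kronv psi phiE) x).
  by rewrite mulmx0 addr0 => /mdv_ext; apply => s.
have dPsiE : mderiv (PsiSE psi phiE U) x = dPsi := mdv_mderiv mPsi.
have mpsit : forall w, mdv (psit psi phiE U P w) x (Qm R dS P w *m dPsi).
  move=> w; have := mdv_mul (mdv_cst (Qm R dS P w) x) mPsi.
  rewrite mul0mx add0r => /mdv_ext; apply => s.
  by rewrite /psit hmop.
have dMop : forall w, mderiv (Mop phiE U P w) x *m psi = Qm R dS P w *m dPsi.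
  move=> w; have := mdv_mul (mdv_mul (mdv_cst (Qm R dS P w) x) mU) (mdv_cst (Km R dS phiE) x).
  rewrite mul0mx add0r mulmx0 addr0 => /mdv_ext h.
  have := h (Mop phiE U P w) (fun s => esym (MopE R dS phiE P U w s)).
  move=> /mdv_mderiv ->.
  by rewrite -!mulmxA hK.
pose m w := Qm R dS P w *m PsiSE psi phiE U x.
pose d w := Qm R dS P w *m dPsi.
have hE : forall w, expect psi (Eop phiE U P w x) = dotc (m w) (m w).
  by move=> w; rewrite /Eop expect_adjM hmop.
have hF : forall w, expect psi (Fop phiE U P w x) = 'i%C * (dotc (m w) (d w))^*.
  by move=> w; rewrite /Fop expectZ expect_adjM dMop hmop -dotcC.
have hG : forall w, expect psi (Gop phiE U P w x) = dotc (d w) (d w).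
  by move=> w; rewrite /Gop expect_adjM dMop.
have hprob : forall w, prob psi phiE U P w x = dotc (m w) (m w).
  by move=> w; rewrite /prob /psit hmop.
have sp : \sum_(w in [set: 'I_dE]) dotc (m w) (m w) = 1.
  by rewrite sum_setT sumQ norm1.
pose z := dotc (PsiSE psi phiE U x) dPsi.
have sa : \sum_w dotc (m w) (d w) = z by rewrite sumQ.
have sG : \sum_(w in [set: 'I_dE]) dotc (d w) (d w) = dotc dPsi dPsi.
  by rewrite sum_setT sumQ.
have zc : z^* = - z.
  have c1 := cdv_dotc mPsi mPsi.
  have c2 : cdv (fun s => dotc (PsiSE psi phiE U s) (PsiSE psi phiE U s)) x 0.
    by have := cdv_cst 1 x; move=> /cdv_ext; apply => s; rewrite norm1.
  have := cdv_uniq c1 c2; rewrite [dotc dPsi _]dotcC -/z => /eqP.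
  by rewrite addr_eq0 => /eqP.
have FOmE : FOm = 'i%C * z^*.
  rewrite /FOm /Fset expect_sum sum_setT.
  under eq_bigr => w _ do rewrite hF.
  by rewrite -big_distrr -rmorph_sum /= sa.
have freal : FOm^* = FOm.
  by rewrite FOmE rmorphM /= conj_i conjCK zc mulrN mulNr.
have sF : \sum_(w in [set: 'I_dE]) 'i%C * (dotc (m w) (d w))^* = FOm.
  by rewrite sum_setT -big_distrr -rmorph_sum /= sa FOmE.
have hIQ : IQ = 4%:R * (expect psi (Gset phiE U P [set: 'I_dE] x) - FOm ^+ 2).
  rewrite /IQ /QFI dPsiE normCK -/z /Gset expect_sum.
  under eq_bigr => w _ do rewrite hG.
  by rewrite sG FOmE zc exprMn sqrrN sqr_i; ring.
have term : forall w, w \in chk ->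
    prob psi phiE U P w x * QFI (sigvec psi phiE U P w) x =
    4%:R * (dotc (d w) (d w) - ('i%C * (dotc (m w) (d w))^*) *
       ('i%C * (dotc (m w) (d w))^*)^* / dotc (m w) (m w)).
  move=> w wc.
  have cq := cdv_dotc (mpsit w) (mpsit w).
  have hq : forall t, 0 <= prob psi phiE U P w t by move=> t; apply: dotc_ge0.
  have [r' hc] := @cdv_invsqrt R (prob psi phiE U P w) x _ hq (hpos w wc) cq.
  have ms := mdv_scale hc (mpsit w).
  rewrite /QFI.
  have -> : mderiv (sigvec psi phiE U P w) x =
     (r'%:C)%C *: psit psi phiE U P w x +
     (sqrtC (prob psi phiE U P w x))^-1 *: (Qm R dS P w *m dPsi).
    by apply: mdv_mderiv; move: ms => /mdv_ext; apply => s.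
  have ep : psit psi phiE U P w x = m w by rewrite /psit hmop.
  rewrite /sigvec ep hprob.
  have pos : 0 < dotc (m w) (m w) by rewrite -hprob hpos.
  have -> : ('i%C * (dotc (m w) (d w))^*) * ('i%C * (dotc (m w) (d w))^*)^* =
     dotc (m w) (d w) * (dotc (m w) (d w))^*.
    rewrite rmorphM /= conj_i conjCK.
    have hi : ('i%C : R[i]) * - 'i%C = 1 by rewrite mulrN -expr2 sqr_i opprK.
    by rewrite mulrACA hi mul1r mulrC.
  apply: (@qfi_alg R dS (m w) (d w)).
  - apply: conj_Creal; rewrite realV; apply: ger0_real; rewrite sqrtC_ge0.
    exact: ltW.
  - exact: conjc_real.
  - rewrite exprVn sqrtCK mulVf //; exact: lt0r_neq0.
have hposm : forall w, w \in chk -> 0 < dotc (m w) (m w).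
  by move=> w wc; rewrite -hprob hpos.
have hH : forall w, 0 <= dotc (d w) (d w) + FOm ^+ 2 * dotc (m w) (m w) -
    FOm * ('i%C * (dotc (m w) (d w))^* + ('i%C * (dotc (m w) (d w))^*)^*).
  move=> w.
  suff -> : dotc (d w) (d w) + FOm ^+ 2 * dotc (m w) (m w) -
    FOm * ('i%C * (dotc (m w) (d w))^* + ('i%C * (dotc (m w) (d w))^*)^*) =
    dotc (d w - ('i%C * FOm) *: m w) (d w - ('i%C * FOm) *: m w) by apply: dotc_ge0.
  rewrite !(dotcBl, dotcBr, dotcZl, dotcZr) [dotc (d w) (m w)]dotcC.
  rewrite !(rmorphM, rmorphD) /= conj_i conjCK freal.
  have hi : ('i%C : R[i]) ^+ 2 = -1 by rewrite sqr_i.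
  set a := dotc (m w) (d w); set p := dotc (m w) (m w).
  apply/eqP; rewrite -subr_eq0; apply/eqP.
  transitivity ((('i%C : R[i]) ^+ 2 + 1) * FOm ^+ 2 * p); first ring.
  by rewrite hi addNr !mul0r.
have cr := @core R _ chk (fun w => dotc (m w) (m w)) (fun w => dotc (d w) (d w))
  (fun w => 'i%C * (dotc (m w) (d w))^*) FOm freal (fun w => @dotc_real R _ (m w)) hposm hH sp sF.
have e4 : forall a b : R[i], (4%:R * a = 4%:R * b) <-> a = b.
  move=> a b; split; last by move->.
  by apply: mulfI; rewrite pnatr_eq0.
have Hiff : lossless <->
        ((forall w, w \in chk ->
            expect psi (Fop phiE U P w x) = FOm * expect psi (Eop phiE U P w x)) /\
         expect psi (Gset phiE U P (~: chk) x) =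
            FOm * expect psi (adj (Fset phiE U P (~: chk) x))).
  rewrite /lossless.
  have -> : \sum_(w in chk) prob psi phiE U P w x * QFI (sigvec psi phiE U P w) x =
    4%:R * \sum_(w in chk) (dotc (d w) (d w) - ('i%C * (dotc (m w) (d w))^*) *
       ('i%C * (dotc (m w) (d w))^*)^* / dotc (m w) (m w)).
    by rewrite big_distrr; apply: eq_bigr => w wc; rewrite term.
  have eG : forall S, expect psi (Gset phiE U P S x) = \sum_(w in S) dotc (d w) (d w).
    by move=> S; rewrite /Gset expect_sum; apply: eq_bigr => w _; rewrite hG.
  have eF : forall S, expect psi (Fset phiE U P S x) =
      \sum_(w in S) 'i%C * (dotc (m w) (d w))^*.
    by move=> S; rewrite /Fset expect_sum; apply: eq_bigr => w _; rewrite hF.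
  rewrite hIQ eG.
  apply: iff_trans (e4 _ _) _; apply: iff_trans cr _.
  rewrite expect_adj eG eF.
  split => -[h1 h2]; split => //.
    by move=> w wc; rewrite hF hE h1.
  by move=> w wc; have := h1 w wc; rewrite hF hE.
split => //.
- by rewrite CrealE freal.
- move=> hl w wc.
  have [C1 _] := Hiff.1 hl.
  have := C1 w wc; rewrite hF hE => hw.
  have cE := cdv_dotc (mpsit w) (mpsit w).
  have cE' : cdv (fun t => expect psi (Eop phiE U P w t)) x
     (dotc (Qm R dS P w *m dPsi) (psit psi phiE U P w x) +
      dotc (psit psi phiE U P w x) (Qm R dS P w *m dPsi)).
    by move: cE => /cdv_ext; apply => t; rewrite /Eop expect_adjM.
  rewrite (cdv_cderiv cE') /psit hmop -/(m w) -/(d w) [dotc (d w) _]dotcC.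
  set a := dotc (m w) (d w).
  have hw' : - 'i%C * a = FOm * dotc (m w) (m w).
    by have := congr1 Num.conj hw; rewrite !rmorphM /= conj_i conjCK freal dotc_real.
  have : 'i%C * (a^* + a) = 0.
    by rewrite mulrDr hw -hw' mulNr addNr.
  move/eqP; rewrite mulf_eq0 => /orP [|/eqP //].
  by rewrite complexiE (negbTE (neq0Ci _)).
Qed.
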